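(* Let $q$ be an odd prime power, $n\ge 2$, and if $n=2$ assume $q\equiv 1\pmod 4$. Let $M=(m_{ij})$ be an $n\times n$ matrix with entries in $\mathbb{F}_q$ such that $m_{ij}+m_{ji}=0$ for all $i\neq j$, $m_{11}\neq m_{22}$, and $m_{ii}=m_{22}$ for all $i>2$. Then $\sharp(\mathrm{Num}_0(M)_q)=(q+1)/2$ and $\mathrm{Num}_0(M)_q\setminus\{0\}$ is the set of all $a\in\mathbb{F}_q^*$ such that $-a/(m_{22}-m_{11})$ is a square in $\mathbb{F}_q$. Moreover $0\in\mathrm{Num}'_0(M)_q$ if and only if either $n\ge 4$, or $n=3$ and $q\equiv 1\pmod 4$.
   Context: The Hermitian form is $\langle u,v\rangle=\sum_i u_i^qv_i$; for $u=(x_1,\dots,x_n)\in\mathbb{F}_q^n$ and $M=(m_{ij})$ over $\mathbb{F}_q$, $\langle u,u\rangle=\sum x_i^2$ and $\langle u,Mu\rangle=\sum_{i,j}m_{ij}x_ix_j$. $\mathrm{Num}_0(M)_q=\{\langle u,Mu\rangle: u\in\mathbb{F}_q^n,\ \langle u,u\rangle=0\}$ and $\mathrm{Num}'_0(M)_q=\{\langle u,Mu\rangle: u\in\mathbb{F}_q^n\setminus\{0\},\ \langle u,u\rangle=0\}$. *)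

(* Defs.v *)
From HB Require Import structures.
From mathcomp Require Import all_boot all_order all_algebra all_field.
Set Implicit Arguments. Unset Strict Implicit. Unset Printing Implicit Defensive.
Import GRing.Theory.
Local Open Scope ring_scope.

Definition hform (F : finFieldType) (n : nat) (u v : 'cV[F]_n) : F :=
  \sum_i (u i 0) ^+ #|F| * v i 0.

Definition Num0 (F : finFieldType) (n : nat) (M : 'M[F]_n) : {set F} :=
  [set hform u (M *m u) | u in [set u : 'cV[F]_n | hform u u == 0]].

Definition Num0' (F : finFieldType) (n : nat) (M : 'M[F]_n) : {set F} :=
  [set hform u (M *m u) | u in [set u : 'cV[F]_n | (u != 0) && (hform u u == 0)]].

(* Main.v *)
Require Import Defs.
From HB Require Import structures.
From mathcomp Require Import all_boot all_order all_algebra all_field all_fingroup all_solvable.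
From mathcomp Require Import zify ring.
Import GRing.Theory FinRing.Theory.
Local Open Scope ring_scope.

Section S.
Variable F : finFieldType.
Hypothesis oF : odd #|F|.

Lemma card0F : (#|F|)%:R = 0 :> F.
Proof. by rewrite -zmodXgE -cardsT expg_cardG ?inE. Qed.

Lemma two_neq0 : (2 : F) != 0.
Proof.
apply/eqP=> h2.
have := card0F; rewrite -(odd_double_half #|F|) oF natrD -muln2 natrM h2 mulr0 addr0.
by move/eqP; rewrite oner_eq0.
Qed.

Lemma eq_opp (t : F) : (t == - t) = (t == 0).
Proof.
by rewrite -addr_eq0 -mulr2n -mulr_natl mulf_eq0 (negbTE two_neq0).
Qed.

Definition sqs := [set x ^+ 2 | x : F].

Lemma card_sqs : (#|sqs|.*2 = #|F|.+1)%N.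
Proof.
have fib : forall s, s \in sqs -> (\sum_(x : F | x ^+ 2 == s) 1 = (s != 0%R).+1)%N.
  move=> s /imsetP[t _ ->].
  rewrite (eq_bigl (mem (pred2 t (-t)))); last by move=> x; rewrite eqf_sqr.
  by rewrite sum1_card card2 eq_opp sqrf_eq0.
have : (#|F| = \sum_(s in sqs) (s != 0%R).+1)%N.
  rewrite -sum1_card (partition_big (fun x : F => x ^+ 2) (mem sqs)) /=; last first.
    by move=> x _; apply: imset_f.
  by apply: eq_bigr => s /fib <-; apply: eq_bigl => x.
have s0 : (0 : F) \in sqs by apply/imsetP; exists 0; rewrite ?expr0n.
rewrite (bigD1 0) //= eqxx /= => ->.
rewrite -muln2 -sum_nat_const (bigD1 0) //=.
by rewrite [in RHS](eq_bigr (fun _ => 2%N)) //; move=> i /andP[_ ->].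
Qed.

Lemma sum2sq (a : F) : exists x y : F, x ^+ 2 + y ^+ 2 = a.
Proof.
pose T := [set a - s | s in sqs].
have cT : #|T| = #|sqs|.
  by apply: card_imset => u v /= /addrI /oppr_inj.
have : sqs :&: T != set0.
  apply/negP => /eqP h0.
  have := cardsUI sqs T; rewrite h0 cards0 addn0 cT addnn card_sqs => hU.
  by have := max_card (mem (sqs :|: T)); rewrite hU ltnn.
case/set0Pn => s /setIP[/imsetP[x _ ->] /imsetP[t /imsetP[y _ ->] hs]].
by exists x, y; rewrite hs subrK.
Qed.

Lemma expf_cardm1 (x : F) : x != 0 -> x ^+ #|F|.-1 = 1.
Proof.
move=> x0; have h := expf_card x.
rewrite -(ltn_predK (finNzRing_gt1 F)) exprS in h.
by apply: (mulfI x0); rewrite mulr1.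
Qed.

Lemma m1_neq1 : (-1 : F) != 1.
Proof. by rewrite eq_sym -addr_eq0 (_ : 1 + 1 = 2) ?two_neq0. Qed.

Lemma sqrt_m1 : (exists i : F, i ^+ 2 = -1) <-> (#|F| %% 4 = 1)%N.
Proof.
have qE := odd_double_half #|F|; rewrite oF in qE.
set h := #|F|./2 in qE.
have qm1 : #|F|.-1 = h.*2 by rewrite -qE.
split.
  case=> i hi.
  have i0 : i != 0 by apply/eqP => i0; move: hi; rewrite i0 expr0n /= => /eqP; rewrite eq_sym oppr_eq0 oner_eq0.
  have := @expf_cardm1 i i0; rewrite qm1 -muln2 mulnC exprM hi -signr_odd.
  case oh: (odd h) => /= => [/eqP|_]; first by rewrite expr1 (negbTE m1_neq1).
  have hE := odd_double_half h; rewrite oh /= add0n in hE.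
  rewrite -qE -hE -!muln2; apply/eqP; rewrite -mulnA add1n.
  by rewrite -addn1 modnMDl.
move=> q4.
have ho : ~~ odd h.
  case oh: (odd h) => //; move: q4.
  have hE := odd_double_half h; rewrite oh in hE.
  rewrite -qE -hE -!muln2 /=; lia.
have hE := odd_double_half h; rewrite (negbTE ho) add0n in hE.
set k := h./2 in hE.
have q1 := finNzRing_gt1 F.
have k0 : (0 < k)%N by move: q1; rewrite -qE -hE -!muln2 /=; lia.
have h0 : (0 < h)%N by rewrite -hE double_gt0.
have : ~~ [forall x : F, (x != 0) ==> (x ^+ h == 1)].
  apply/negP => /forallP allx.
  have Pn0 : ('X^h - 1 : {poly F}) != 0.
    by rewrite -size_poly_eq0 size_Xn_sub_1.
  have := max_poly_roots Pn0 _ (enum_uniq (predC1 (0 : F))).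
  rewrite -cardE cardC1 size_Xn_sub_1 // qm1 -muln2.
  have -> : (h * 2 < h.+1)%N = false by lia.
  move=> H; apply: notF; apply: H.
  apply/allP => x; rewrite mem_enum /= => x0.
  by rewrite rootE !hornerE subr_eq0; have := allx x; rewrite (_ : (x != 0) = true).
move/forallPn => [x]; rewrite negb_imply => /andP[x0 xh].
have y2 : (x ^+ h) ^+ 2 = 1 by rewrite -exprM muln2 -qm1 expf_cardm1.
have : x ^+ h == -1.
  by move/eqP: y2; rewrite sqrf_eq1 (negbTE xh).
move/eqP => xhm1.
by exists (x ^+ k); rewrite -exprM muln2 hE.
Qed.

Lemma hformE m (u v : 'cV[F]_m) : hform u v = \sum_i u i 0 * v i 0.
Proof. by apply: eq_bigr => i _; rewrite expf_card. Qed.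

Lemma hform_vec m (f : nat -> F) :
  hform (\col_(j < m) f j) (\col_(j < m) f j) = \sum_(0 <= j < m) f j ^+ 2.
Proof. by rewrite hformE big_mkord; apply: eq_bigr => j _; rewrite !mxE expr2. Qed.

Lemma quadE m (M : 'M[F]_m) (u : 'cV[F]_m) :
  (forall i j, i != j -> M i j + M j i = 0) ->
  hform u (M *m u) = \sum_i M i i * (u i 0) ^+ 2.
Proof.
move=> hsk; rewrite hformE.
pose x i := u i 0.
set S := \sum_i _.
have -> : S = \sum_i \sum_j M i j * (x i * x j).
  apply: eq_bigr => i _; rewrite mxE mulr_sumr; apply: eq_bigr => j _.
  by rewrite /x; ring.
apply: (mulfI two_neq0).
have -> : 2 * (\sum_i \sum_j M i j * (x i * x j)) =
   \sum_i \sum_j (M i j + M j i) * (x i * x j).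
  have two_z : forall z : F, 2 * z = z + z by move=> z; ring.
  rewrite two_z {2}exchange_big /= -big_split /=.
  apply: eq_bigr => i _; rewrite -big_split /=; apply: eq_bigr => j _.
  by rewrite mulrDl [x j * _]mulrC.
rewrite mulr_sumr; apply: eq_bigr => i _.
rewrite (bigD1 i) //= big1 ?addr0; last first.
  by move=> j ji; rewrite hsk ?mul0r // eq_sym.
by rewrite /x; ring.
Qed.

Lemma sum_nth m (s : seq F) : (size s <= m)%N ->
  \sum_(0 <= j < m) (nth 0 s j) ^+ 2 = \sum_(x <- s) x ^+ 2.
Proof.
move=> sm; rewrite (@big_cat_nat _ _ _ (size s)) //=.
rewrite [X in _ + X]big1_seq ?addr0; last first.
  by move=> j /andP[_]; rewrite mem_index_iota => /andP[sj _]; rewrite nth_default // expr0n.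
by rewrite [RHS](big_nth 0).
Qed.

End S.
Section T.
Variables (F : finFieldType) (n : nat) (M : 'M[F]_n.+2).
Hypothesis oF : odd #|F|.
Hypothesis hn0 : (n = 0%N -> #|F| %% 4 = 1)%N.
Hypothesis hsk : forall i j : 'I_n.+2, i != j -> M i j + M j i = 0.
Hypothesis hd : M ord0 ord0 != M 1 1.
Hypothesis hdi : forall i : 'I_n.+2, (2 < i.+1)%N -> M i i = M 1 1.

Let c := M ord0 ord0 - M 1 1.
Lemma c0 : c != 0. Proof. by rewrite subr_eq0. Qed.

Definition tl (u : 'cV[F]_n.+2) := \sum_(i < n.+1) (u (lift ord0 i) 0) ^+ 2.

Lemma hformuu u : hform u u = (u ord0 0) ^+ 2 + tl u.
Proof.
rewrite hformE big_ord_recl /tl expr2; congr (_ + _).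
Qed.

Lemma diagM i : M (lift ord0 i) (lift ord0 i) = M 1 1.
Proof.
case: (unliftP ord0 i) => [i' ->|->].
  by apply: hdi.
by congr (M _ _); apply: val_inj.
Qed.

Lemma valueE u : hform u (M *m u) = M ord0 ord0 * (u ord0 0) ^+ 2 + M 1 1 * tl u.
Proof.
rewrite quadE // big_ord_recl /tl mulr_sumr; congr (_ + _).
by apply: eq_bigr => i _; rewrite diagM.
Qed.

Lemma iso_value u : hform u u = 0 -> hform u (M *m u) = c * (u ord0 0) ^+ 2.
Proof.
rewrite hformuu valueE => /eqP; rewrite addr_eq0 => /eqP ->.
by rewrite /c; ring.
Qed.

Lemma exists_iso a : exists u : 'cV[F]_n.+2, hform u u = 0 /\ u ord0 0 = a.
Proof.
case: (posnP n) => [n0|npos].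
  have [i hi] := (proj2 (@sqrt_m1 F oF)) (hn0 n0).
  exists (\col_(j < n.+2) nth 0 [:: a; a * i] j); split; last by rewrite mxE.
  rewrite hform_vec sum_nth // !big_cons big_nil.
  by rewrite exprMn hi; ring.
have [x [y hxy]] := @sum2sq F oF (- a ^+ 2).
exists (\col_(j < n.+2) nth 0 [:: a; x; y] j); split; last by rewrite mxE.
rewrite hform_vec sum_nth // !big_cons big_nil addr0 hxy.
by rewrite addrN.
Qed.

Lemma N0 : Num0 M = [set c * s | s in sqs F].
Proof.
apply/setP => a; apply/imsetP/imsetP.
  case=> u; rewrite inE => /eqP uiso ->.
  by exists ((u ord0 0) ^+ 2); [apply: imset_f | rewrite iso_value].
case=> s /imsetP[x _ ->] ->.
have [u [uiso ux]] := exists_iso x.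
by exists u; [rewrite inE uiso | rewrite iso_value // ux].
Qed.

End T.


Theorem proposition9 (F : finFieldType) (n : nat) (M : 'M[F]_n.+2) :
  odd #|F| ->
  (n = 0%N -> #|F| %% 4 = 1)%N ->
  (forall i j : 'I_n.+2, i != j -> M i j + M j i = 0) ->
  M ord0 ord0 != M 1 1 ->
  (forall i : 'I_n.+2, (2 < i.+1)%N -> M i i = M 1 1) ->
  #|Num0 M| = (#|F|.+1 %/ 2)%N
  /\ Num0 M :\ 0 = [set a : F | (a != 0) &&
                     [exists b : F, - a / (M 1 1 - M ord0 ord0) == b ^+ 2]]
  /\ (0 \in Num0' M <-> (4 <= n.+2)%N \/ (n.+2 = 3%N /\ #|F| %% 4 = 1)%N).
Proof.
move=> oF hn0 hsk hd hdi.
have c0 : M ord0 ord0 - M 1 1 != 0 by rewrite subr_eq0.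
have hN0 := N0 _ _ _ oF hn0 hsk hdi.
split; [|split].
- rewrite hN0 card_imset; last exact: mulfI c0.
  by rewrite -(card_sqs _ oF) -muln2 mulnK.
- apply/setP => a; rewrite !inE hN0.
  apply/andP/andP => [[a0 /imsetP[s /imsetP[b _ ->] ha]]|[a0 /existsP[b /eqP hb]]]; split; try exact: a0.
    apply/existsP; exists b.
    by rewrite ha -[M 1 1 - _]opprB invrN mulrNN mulrC mulKf.
  apply/imsetP; exists (b ^+ 2); first exact: imset_f.
  by rewrite -hb -[M 1 1 - _]opprB invrN mulrNN mulrC divfK.
split.
  case/imsetP => u; rewrite inE => /andP[u0 /eqP uiso] h0.
  have x0 : u ord0 0 = 0.
    move: h0; rewrite iso_value // => /eqP; rewrite eq_sym mulf_eq0 (negbTE c0) sqrf_eq0 /=.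
    by move/eqP.
  have tl0 : tl _ _ u = 0 by move: uiso; rewrite hformuu x0 expr0n add0r.
  clear -u0 tl0 x0 oF.
  move: u u0 tl0 x0; rewrite /tl; case: n => [|[|k]] u u0 tl0 x0.
  - exfalso; move: tl0; rewrite big_ord_recl big_ord0 addr0 => /eqP; rewrite sqrf_eq0 => /eqP y1.
    move/eqP: u0; apply; apply/matrixP => i j; rewrite ord1 mxE.
    case: (unliftP ord0 i) => [i' ->|->] //.
    by rewrite ord1.
  - right; split => //; apply/(sqrt_m1 _ oF).
    move: tl0; rewrite !big_ord_recl big_ord0 addr0.
    set y1 := u _ 0; set y2 := u _ 0 => h12.
    case: (eqVneq y1 0) => [y10|y10].
      exfalso; move: h12; rewrite y10 expr0n add0r => /eqP; rewrite sqrf_eq0 => /eqP y20.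
      move/eqP: u0; apply; apply/matrixP => i j; rewrite ord1 mxE.
      case: (unliftP ord0 i) => [i' ->|->] //.
      case: (unliftP ord0 i') => [i'' ->|->] //.
      by rewrite ord1.
    exists (y2 / y1); rewrite expr_div_n.
    move/eqP: h12; rewrite addrC addr_eq0 => /eqP ->.
    by rewrite mulNr divff // sqrf_eq0.
  - by left.
have key : forall (s : seq F) j (hj : (j < n.+2)%N), (size s <= n.+2)%N ->
    nth 0 s 0 = 0 -> \sum_(x <- s) x ^+ 2 = 0 -> nth 0 s j != 0 -> 0 \in Num0' M.
  move=> s j hj ss s0 ssum sj.
  apply/imsetP; exists (\col_(i < n.+2) nth 0 s i).
    rewrite inE hform_vec sum_nth // ssum eqxx andbT.
    apply/eqP => h; move: sj; have := congr1 (fun v : 'cV[F]_n.+2 => v (Ordinal hj) 0) h.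
    by rewrite !mxE /= => ->; rewrite eqxx.
  rewrite iso_value //; first by rewrite mxE s0 expr0n mulr0.
  by rewrite hform_vec sum_nth.
clear -key oF.
move: M key; case: n => [|[|k]] M key.
- by case => //; case.
- case => [//|[_ q4]].
  have [i hi] := (proj2 (sqrt_m1 _ oF)) q4.
  apply: (key [:: 0; 1; i] 1%N) => //.
    by rewrite !big_cons big_nil hi expr0n expr1n add0r addr0 addrN.
  by rewrite /= oner_eq0.
- move=> _.
  have [x [y hxy]] := sum2sq _ oF (-1).
  apply: (key [:: 0; x; y; 1] 3%N) => //.
    by rewrite !big_cons big_nil expr0n add0r addrA hxy expr1n addr0 addNr.
  by rewrite /= oner_eq0.
Qed.
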